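(* In the setting described in the context, the set $\{\ell_{xy}\mid x,y\in V\}$ spans the whole space $V^*$. Moreover, if $a\in V$ is such that either $\ell_{ax}=0$ for all $x\in V$ or $\ell_{xa}=0$ for all $x\in V$, then $a=0$.
   Context: Let $V$ be a $3$-dimensional vector space over a field $k$ and $\zeta\in GL(V)$. Write $xy$ for $x\otimes y$ in $T(V)$. Put $x\barwedge y=\zeta(x)y-\zeta(y)x$ and $x\barwedge y\barwedge z=\zeta^2(x)\zeta(y)z+\zeta^2(y)\zeta(z)x+\zeta^2(z)\zeta(x)y-\zeta^2(x)\zeta(z)y-\zeta^2(y)\zeta(x)z-\zeta^2(z)\zeta(y)x$. Let $I_2=\mathrm{span}\{x\barwedge y\}\subset V^{\otimes 2}$ and $\Upsilon^{(3)}=(I_2\otimes V)\cap(V\otimes I_2)=\mathrm{span}\{x\barwedge y\barwedge z\}$ (one-dimensional). Via the isomorphisms $\bigwedge^2V\cong I_2$, $x\wedge y\mapsto x\barwedge y$, and $\bigwedge^3V\cong\Upsilon^{(3)}$, $x\wedge y\wedge z\mapsto x\barwedge y\barwedge z$, there is a bilinear product $x\barwedge w\in\Upsilon^{(3)}$ for $x\in V$, $w\in I_2$, with $x\barwedge(y\barwedge z)=x\barwedge y\barwedge z$. Let $R$ be a Hecke symmetry on $V$ with parameter $q\neq0$ (braid equation and $(R-q\,\mathrm{Id})(R+\mathrm{Id})=0$) such that $\mathrm{Im}(R-q\,\mathrm{Id})=I_2$ (i.e. $\mathbb{S}(V,R)=T(V)/(I_2)$). Put $Y=q\,\mathrm{Id}-R$.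 Fix a nonzero alternating trilinear form $\omega$ on $V$, let $\tilde\omega:\Upsilon^{(3)}\to k$ be the linear map with $\tilde\omega(x\barwedge y\barwedge z)=\omega(x,y,z)$, and define $\ell_{xy}\in V^*$ by $\ell_{xy}(z)=\tilde\omega\big(x\barwedge Y(\zeta(y)z)\big)$. *)

(* Defs.v *)
From HB Require Import structures.
From mathcomp Require Import all_boot all_order all_algebra.
Set Implicit Arguments. Unset Strict Implicit. Unset Printing Implicit Defensive.
Import GRing.Theory.
Local Open Scope ring_scope.

(* Coordinates: V = k^3 as row vectors; a linear map zeta in GL(V) is an
   invertible 3x3 matrix acting by x |-> x *m zeta.
   V (x) V is modelled by 3x3 matrices, x (x) y = x^T *m y (entry (i,j) = x_i y_j). *)

Notation V k := 'rV[k]_3.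
Notation T2 k := 'M[k]_3.
Notation T3 k := {ffun 'I_3 * 'I_3 * 'I_3 -> k^o}.

Section Tensors.
Variable k : fieldType.
Local Notation V := (V k).
Local Notation T2 := (T2 k).
Local Notation T3 := (T3 k).

Definition zact (Z : 'M[k]_3) (x : V) : V := x *m Z.

Definition tensor2 (x y : V) : T2 := x^T *m y.
Definition tensor3 (x y z : V) : T3 :=
  [ffun p : 'I_3 * 'I_3 * 'I_3 => x 0 p.1.1 * y 0 p.1.2 * z 0 p.2].

Definition wedge2 (Z : 'M[k]_3) (x y : V) : T2 :=
  tensor2 (zact Z x) y - tensor2 (zact Z y) x.

Definition wedge3 (Z : 'M[k]_3) (x y z : V) : T3 :=
  let Z2 := zact Z \o zact Z in
  tensor3 (Z2 x) (zact Z y) z + tensor3 (Z2 y) (zact Z z) x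
  + tensor3 (Z2 z) (zact Z x) y - tensor3 (Z2 x) (zact Z z) y
  - tensor3 (Z2 y) (zact Z x) z - tensor3 (Z2 z) (zact Z y) x.

(* R (x) Id and Id (x) R on V^{(x)3}, for R a linear endomorphism of V (x) V *)
Definition slice12 (t : T3) (l : 'I_3) : T2 := \matrix_(i, j) t (i, j, l).
Definition slice23 (t : T3) (i : 'I_3) : T2 := \matrix_(j, l) t (i, j, l).
Definition R12 (R : T2 -> T2) (t : T3) : T3 :=
  [ffun p : 'I_3 * 'I_3 * 'I_3 => R (slice12 t p.2) p.1.1 p.1.2].
Definition R23 (R : T2 -> T2) (t : T3) : T3 :=
  [ffun p : 'I_3 * 'I_3 * 'I_3 => R (slice23 t p.1.1) p.1.2 p.2].

End Tensors.

Definition islin (k : fieldType) (U W : lmodType k) (f : U -> W) : Prop :=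
  forall (a : k) (u v : U), f (a *: u + v) = a *: f u + f v.
Definition islin_k (k : fieldType) (U : lmodType k) (f : U -> k) : Prop :=
  forall (a : k) (u v : U), f (a *: u + v) = a * f u + f v.

Definition in_span (k : fieldType) (U : lmodType k) (S : U -> Prop) (w : U) : Prop :=
  exists (n : nat) (c : 'I_n -> k) (v : 'I_n -> U),
    (forall i, S (v i)) /\ w = \sum_(i < n) c i *: v i.

Definition I2 (k : fieldType) (Z : 'M[k]_3) (w : T2 k) : Prop :=
  in_span (fun v : T2 k => exists x y, v = wedge2 Z x y) w.

Definition braid (k : fieldType) (R : T2 k -> T2 k) : Prop :=
  forall t : T3 k, R12 R (R23 R (R12 R t)) = R23 R (R12 R (R23 R t)).
Definition hecke (k : fieldType) (R : T2 k -> T2 k) (q : k) : Prop :=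
  forall w : T2 k, let u := R w + w in R u - q *: u = 0.

Definition trilinear (k : fieldType) (om : V k -> V k -> V k -> k) : Prop :=
  (forall y z, islin_k (fun x => om x y z)) /\
  (forall x z, islin_k (fun y => om x y z)) /\
  (forall x y, islin_k (fun z => om x y z)).
Definition alternating (k : fieldType) (om : V k -> V k -> V k -> k) : Prop :=
  (forall x z, om x x z = 0) /\ (forall x y, om x y y = 0) /\ (forall x y, om x y x = 0).

Definition Ymap (k : fieldType) (R : T2 k -> T2 k) (q : k) (w : T2 k) : T2 k :=
  q *: w - R w.

(* ell_{xy}(z) = omega~( x barwedge Y(zeta(y) z) ), where
   omt : T3 -> k is a linear functional extending omega~ on Upsilon^(3) and
   prd : V -> T2 -> T3 is a bilinear map extending the product x barwedge w (w in I_2). *)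
Definition ell (k : fieldType) (Z : 'M[k]_3) (R : T2 k -> T2 k) (q : k)
  (omt : T3 k -> k) (prd : V k -> T2 k -> T3 k) (x y z : V k) : k :=
  omt (prd x (Ymap R q (tensor2 (zact Z y) z))).

(* Main.v *)
Require Import Defs.
From HB Require Import structures.
From mathcomp Require Import all_boot all_order all_algebra.
From mathcomp Require Import ring zify.
Set Implicit Arguments. Unset Strict Implicit.
Import GRing.Theory.
Local Open Scope ring_scope.
Section Lin.
Variable k : fieldType.

Lemma lin0 (U W : lmodType k) (f : U -> W) : islin f -> f 0 = 0.
Proof. move=> h; have E := h 1 0 0; rewrite !scale1r addr0 in E. by apply: (@addrI _ (f 0)); rewrite -E addr0. Qed.
Lemma linD (U W : lmodType k) (f : U -> W) : islin f -> forall u v, f (u + v) = f u + f v.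
Proof. by move=> h u v; have := h 1 u v; rewrite !scale1r. Qed.
Lemma linZ (U W : lmodType k) (f : U -> W) : islin f -> forall a u, f (a *: u) = a *: f u.
Proof. by move=> h a u; rewrite -[a *: u]addr0 h (lin0 h) addr0. Qed.
Lemma linN (U W : lmodType k) (f : U -> W) : islin f -> forall u, f (- u) = - f u.
Proof. by move=> h u; rewrite -scaleN1r (linZ h) scaleN1r. Qed.
Lemma linS (U W : lmodType k) (f : U -> W) : islin f -> forall I (r : seq I) (P : pred I) F,
  f (\sum_(i <- r | P i) F i) = \sum_(i <- r | P i) f (F i).
Proof. by move=> h I r P F; apply: (big_morph f (linD h) (lin0 h)). Qed.

Lemma link0 (U : lmodType k) (f : U -> k) : islin_k f -> f 0 = 0.
Proof. move=> h; have E := h 1 0 0; rewrite scale1r addr0 mul1r in E. by apply: (@addrI _ (f 0)); rewrite -E addr0. Qed.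
Lemma linkD (U : lmodType k) (f : U -> k) : islin_k f -> forall u v, f (u + v) = f u + f v.
Proof. by move=> h u v; have := h 1 u v; rewrite scale1r mul1r. Qed.
Lemma linkZ (U : lmodType k) (f : U -> k) : islin_k f -> forall a u, f (a *: u) = a * f u.
Proof. by move=> h a u; rewrite -[a *: u]addr0 h (link0 h) addr0. Qed.
Lemma linkN (U : lmodType k) (f : U -> k) : islin_k f -> forall u, f (- u) = - f u.
Proof. by move=> h u; rewrite -scaleN1r (linkZ h) mulN1r. Qed.
Lemma linkS (U : lmodType k) (f : U -> k) : islin_k f -> forall I (r : seq I) (P : pred I) F,
  f (\sum_(i <- r | P i) F i) = \sum_(i <- r | P i) f (F i).
Proof. by move=> h I r P F; apply: (big_morph f (linkD h) (link0 h)). Qed.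

Lemma comp_lk (U W : lmodType k) (f : U -> W) (g : W -> k) :
  islin f -> islin_k g -> islin_k (fun u => g (f u)).
Proof. by move=> hf hg a u v; rewrite hf hg. Qed.
Lemma comp_ll (U W X : lmodType k) (f : U -> W) (g : W -> X) :
  islin f -> islin g -> islin (fun u => g (f u)).
Proof. by move=> hf hg a u v; rewrite hf hg. Qed.

Lemma span_eq (U : lmodType k) (S : U -> Prop) (f g : U -> k) w :
  islin_k f -> islin_k g -> (forall v, S v -> f v = g v) -> in_span S w -> f w = g w.
Proof.
move=> hf hg hS [n [c [v [Sv ->]]]].
rewrite (linkS hf) (linkS hg); apply: eq_bigr => i _.
by rewrite (linkZ hf) (linkZ hg) hS.
Qed.
End Lin.
Definition i0 : 'I_3 := @Ordinal 3 0 isT.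
Definition i1 : 'I_3 := @Ordinal 3 1 isT.
Definition i2 : 'I_3 := @Ordinal 3 2 isT.

Lemma ord3 (i : 'I_3) : i = i0 \/ i = i1 \/ i = i2.
Proof.
case: i => [[|[|[|m]]] H]; first (by left; apply: val_inj);
  first (by right; left; apply: val_inj); first (by right; right; apply: val_inj).
by [].
Qed.

Lemma eq01 : (i0 == i1) = false. Proof. by []. Qed.
Lemma eq02 : (i0 == i2) = false. Proof. by []. Qed.
Lemma eq10 : (i1 == i0) = false. Proof. by []. Qed.
Lemma eq12 : (i1 == i2) = false. Proof. by []. Qed.
Lemma eq20 : (i2 == i0) = false. Proof. by []. Qed.
Lemma eq21 : (i2 == i1) = false. Proof. by []. Qed.
Definition eqs := (eq01, eq02, eq10, eq12, eq20, eq21, eqxx).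

Section M.
Variable k : fieldType.
Definition e (i : 'I_3) : V k := delta_mx 0 i.

Lemma eE i j : e i 0 j = (i == j)%:R.
Proof. by rewrite /e mxE eqxx /= eq_sym. Qed.

Lemma tensor2E (x y : V k) i j : tensor2 x y i j = x 0 i * y 0 j.
Proof. by rewrite /tensor2 mxE big_ord1 mxE. Qed.

Lemma rowdec (x : V k) : x = x 0 i0 *: e i0 + x 0 i1 *: e i1 + x 0 i2 *: e i2.
Proof.
apply/rowP => j; rewrite !mxE.
by case: (ord3 j) => [->|[->|->]]; rewrite !eqs /=; ring.
Qed.

Lemma rowdecS (x : V k) : x = \sum_(j < 3) x 0 j *: e j.
Proof. exact: row_sum_delta. Qed.

Lemma lin3 (f : V k -> k) : islin_k f -> forall x,
  f x = x 0 i0 * f (e i0) + x 0 i1 * f (e i1) + x 0 i2 * f (e i2).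
Proof. by move=> h x; rewrite {1}(rowdec x) !(linkD h) !(linkZ h). Qed.

Lemma delta_tensor (i j : 'I_3) : delta_mx i j = tensor2 (e i) (e j) :> T2 k.
Proof.
apply/matrixP => a b; rewrite tensor2E !eE mxE.
rewrite [i == a]eq_sym [j == b]eq_sym. by case: (a == i); case: (b == j); rewrite /= ?mulr0 ?mulr1 ?mul0r.
Qed.
End M.
Arguments e {k}.
Section Om.
Variable k : fieldType.
Definition dual (x : V k) (A : T2 k) : k :=
  x 0 i0 * A i1 i2 - x 0 i1 * A i0 i2 + x 0 i2 * A i0 i1.

Variable om : V k -> V k -> V k -> k.
Hypothesis tri : trilinear om.
Hypothesis alt : alternating om.

Lemma om_swap12 x y z : om y x z = - om x y z.
Proof.
case: tri => [h1 [h2 h3]]; case: alt => [a1 [a2 a3]].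
have := a1 (x + y) z.
rewrite (linkD (h1 _ _)) !(linkD (h2 _ _)) !a1 add0r addr0 addrC => /eqP.
by rewrite addr_eq0 => /eqP.
Qed.

Lemma om_swap23 x y z : om x z y = - om x y z.
Proof.
case: tri => [h1 [h2 h3]]; case: alt => [a1 [a2 a3]].
have := a2 x (y + z).
rewrite (linkD (h2 _ _)) !(linkD (h3 _ _)) !a2 add0r addr0 addrC => /eqP.
by rewrite addr_eq0 => /eqP.
Qed.

Lemma om_det x y z :
  om x y z = om (e i0) (e i1) (e i2) * dual x (tensor2 y z - tensor2 z y).
Proof.
case: tri => [h1 [h2 h3]]; case: alt => [a1 [a2 a3]].
rewrite (lin3 (h1 y z)).
rewrite (lin3 (h2 (e i0) z)) (lin3 (h2 (e i1) z)) (lin3 (h2 (e i2) z)).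
rewrite (lin3 (h3 (e i0) (e i0))) (lin3 (h3 (e i0) (e i1))) (lin3 (h3 (e i0) (e i2))).
rewrite (lin3 (h3 (e i1) (e i0))) (lin3 (h3 (e i1) (e i1))) (lin3 (h3 (e i1) (e i2))).
rewrite (lin3 (h3 (e i2) (e i0))) (lin3 (h3 (e i2) (e i1))) (lin3 (h3 (e i2) (e i2))).
rewrite !a1 !a2 !a3.
rewrite (om_swap12 (e i0) (e i1) (e i2)).
rewrite (om_swap23 (e i0) (e i1) (e i2)).
rewrite (om_swap23 (e i1) (e i0) (e i2)) (om_swap12 (e i0) (e i1) (e i2)).
rewrite (om_swap12 (e i0) (e i2) (e i1)) (om_swap23 (e i0) (e i1) (e i2)).
rewrite (om_swap23 (e i2) (e i0) (e i1)) (om_swap12 (e i0) (e i2) (e i1)) (om_swap23 (e i0) (e i1) (e i2)).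
rewrite /dual !mxE !big_ord1 !mxE.
ring.
Qed.
End Om.
Section Br.
Variable k : fieldType.
Variable R : T2 k -> T2 k.
Variable q : k.
Hypothesis hR : islin R.
Hypothesis hb : braid R.

Definition tl (s : T2 k) (z : V k) : T3 k := [ffun p => s p.1.1 p.1.2 * z 0 p.2].
Definition tr (u : V k) (s : T2 k) : T3 k := [ffun p => u 0 p.1.1 * s p.1.2 p.2].

Lemma R12_tl s z : R12 R (tl s z) = tl (R s) z.
Proof.
apply/ffunP => p; rewrite !ffunE.
have -> : slice12 (tl s z) p.2 = z 0 p.2 *: s.
  by apply/matrixP => i j; rewrite !mxE ffunE /= mulrC.
by rewrite (linZ hR) mxE mulrC.
Qed.

Lemma R23_tr u s : R23 R (tr u s) = tr u (R s).
Proof.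
apply/ffunP => p; rewrite !ffunE.
have -> : slice23 (tr u s) p.1.1 = u 0 p.1.1 *: s.
  by apply/matrixP => i j; rewrite !mxE ffunE /=.
by rewrite (linZ hR) mxE.
Qed.

Lemma R23_tl s z : (forall u, R (tensor2 u z) = q *: tensor2 u z) ->
  R23 R (tl s z) = tl (q *: s) z.
Proof.
move=> H; apply/ffunP => p; rewrite !ffunE.
have -> : slice23 (tl s z) p.1.1 = tensor2 (row p.1.1 s) z.
  by apply/matrixP => i j; rewrite !mxE ffunE !big_ord1 !mxE.
by rewrite H !mxE !big_ord1 !mxE mulrA.
Qed.

Lemma R12_tr u s : (forall v, R (tensor2 u v) = q *: tensor2 u v) ->
  R12 R (tr u s) = tr u (q *: s).
Proof.
move=> H; apply/ffunP => p; rewrite !ffunE.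
have -> : slice12 (tr u s) p.2 = tensor2 u (col p.2 s)^T.
  by apply/matrixP => i j; rewrite !mxE ffunE !big_ord1 !mxE.
by rewrite H !mxE !big_ord1 !mxE mulrCA.
Qed.

Lemma tlZ a s z : a *: tl s z = tl (a *: s) z.
Proof. by apply/ffunP => p; rewrite !ffunE mxE /= -mulrA. Qed.
Lemma trZ a u s : a *: tr u s = tr u (a *: s).
Proof. by apply/ffunP => p; rewrite !ffunE mxE /= mulrCA. Qed.

Lemma braid_case1 z : z != 0 -> (forall u, R (tensor2 u z) = q *: tensor2 u z) ->
  q != 0 -> forall s, R (R s) = q *: R s.
Proof.
move=> nz H nq s.
have := hb (tl s z).
rewrite R12_tl (R23_tl _ H) R12_tl (R23_tl _ H) R12_tl (R23_tl _ H) !(linZ hR).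
move/ffunP => E.
have [l zl] : exists l, z 0 l != 0.
  apply/existsP; apply: contraNT nz; rewrite negb_exists => /forallP h.
  by apply/eqP/rowP => j; rewrite mxE; apply/eqP; have := h j; rewrite negbK.
apply/matrixP => i j; have := E (i, j, l); rewrite !ffunE /= !mxE.
move/(mulIf zl)/(mulfI nq) => ->; by [].
Qed.

Lemma braid_case2 u : u != 0 -> (forall v, R (tensor2 u v) = q *: tensor2 u v) ->
  q != 0 -> forall s, R (R s) = q *: R s.
Proof.
move=> nz H nq s.
have := hb (tr u s).
rewrite (R12_tr _ H) R23_tr (R12_tr _ H) R23_tr (R12_tr _ H) R23_tr !(linZ hR).
move/ffunP => E.
have [l zl] : exists l, u 0 l != 0.
  apply/existsP; apply: contraNT nz; rewrite negb_exists => /forallP h.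
  by apply/eqP/rowP => j; rewrite mxE; apply/eqP; have := h j; rewrite negbK.
apply/matrixP => i j; have := E (l, i, j); rewrite !ffunE /= !mxE.
move/(mulfI zl)/(mulfI nq) => ->; by [].
Qed.
End Br.
Unset Implicit Arguments. Set Strict Implicit.
Lemma step1 (k : fieldType) (Z : 'M[k]_3) (R : T2 k -> T2 k) (q : k) :
  Z \in unitmx -> islin R -> hecke R q ->
  (forall w : T2 k, (exists u, w = R u - q *: u) <-> I2 Z w) ->
  (forall s, R (R s) = q *: R s) -> False.
Proof.
move=> Zu hR hh hI RR.
have Rq : forall w, R w = q *: w.
  move=> w; have := hh w; rewrite /= (linD hR) RR => /matrixP E.
  apply/matrixP => i j; have := E i j; rewrite !mxE => h.
  apply/eqP; rewrite -subr_eq0; apply/eqP; rewrite -h; ring.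
have : I2 Z (wedge2 Z (e i0) (e i1)).
  exists 1%N, (fun _ => 1), (fun _ => wedge2 Z (e i0) (e i1)); split.
    by move=> _; exists (e i0), (e i1).
  by rewrite big_ord1 scale1r.
move/hI => [u]; rewrite Rq subrr => /matrixP E.
have h0 : e i0 *m Z = 0.
  apply/rowP => a; have := E a i1; rewrite /wedge2 /zact !mxE !big_ord1 !mxE.
  by rewrite !eqs /= mulr1 mulr0 subr0 => h; exact: h.

have : e i0 = 0 :> V k by rewrite -(mulmxK Zu (e i0)) h0 mul0mx.
by move/rowP => /(_ i0); rewrite eE mxE eqxx /= => /eqP; rewrite oner_eq0.
Qed.

Lemma lin_entry (k : fieldType) (M : 'M[k]_3) (i j : 'I_3) :
  islin_k (fun w : T2 k => (M *m w) i j).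
Proof. by move=> a u v; rewrite mulmxDr -scalemxAr !mxE. Qed.

Lemma WT (k : fieldType) (Z : 'M[k]_3) (y z : V k) : Z \in unitmx ->
  (invmx Z)^T *m tensor2 (y *m Z) z = tensor2 y z.
Proof.
move=> Zu; rewrite /tensor2 trmx_mul !mulmxA -trmx_mul mulmxV // trmx1 mul1mx //.
Qed.

Lemma Ymap_lin (k : fieldType) (R : T2 k -> T2 k) q : islin R -> islin (Ymap R q).
Proof. by move=> hR a u v; apply/matrixP => i j; rewrite /Ymap hR !mxE; ring. Qed.

Lemma tensor2_linr (k : fieldType) (x : V k) : islin (fun z => tensor2 x z).
Proof. by move=> a u v; rewrite /tensor2 mulmxDr scalemxAr. Qed.
Lemma tensor2_linl (k : fieldType) (z : V k) : islin (fun x => tensor2 x z).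
Proof. by move=> a u v; rewrite /tensor2 linearD linearZ /= mulmxDl scalemxAl. Qed.
Theorem lemma2p4 (k : fieldType) (Z : 'M[k]_3) (R : T2 k -> T2 k) (q : k)
  (omega : V k -> V k -> V k -> k) (omt : T3 k -> k) (prd : V k -> T2 k -> T3 k) :
  Z \in unitmx ->
  q != 0 ->
  islin R -> braid R -> hecke R q ->
  (forall w : T2 k, (exists u, w = R u - q *: u) <-> I2 Z w) ->
  trilinear omega -> alternating omega -> (exists x y z, omega x y z != 0) ->
  islin_k omt -> (forall x y z, omt (wedge3 Z x y z) = omega x y z) ->
  (forall x, islin (prd x)) -> (forall w, islin (fun x => prd x w)) ->
  (forall x y z, prd x (wedge2 Z y z) = wedge3 Z x y z) ->
  (forall f : V k -> k, islin_k f ->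
     exists (n : nat) (c : 'I_n -> k) (xs ys : 'I_n -> V k),
       forall z, f z = \sum_(i < n) c i * ell Z R q omt prd (xs i) (ys i) z)
  /\
  (forall a : V k,
     ((forall x z, ell Z R q omt prd a x z = 0) \/
      (forall x z, ell Z R q omt prd x a z = 0)) -> a = 0).
Proof.
move=> Zu nq hR hb hh hI tri alt [x0 [y0 [z0 nz0]]] homt hom hprd hprd2 hpw.
set W := invmx Z.
set c := omega (e i0) (e i1) (e i2).
have nc : c != 0.
  apply: contraNneq nz0 => c0; by rewrite (om_det tri alt) -/c c0 mul0r.
have S1 := @step1 _ Z R q Zu hR hh hI.
have YI2 : forall w, I2 Z (Ymap R q w).
  move=> w; apply/hI; exists (- w); by rewrite /Ymap (linN hR) scalerN opprK addrC.
have gen : forall y z, (W^T *m wedge2 Z y z) = tensor2 y z - tensor2 z y.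
  by move=> y z; rewrite /wedge2 mulmxBr /zact !(@WT _ Z _ _ Zu).
have Ka : forall w, I2 Z w -> forall x, omt (prd x w) = c * dual x (W^T *m w).
  move=> w Iw x; apply: (span_eq (f := fun w => omt (prd x w))
                     (g := fun w => c * dual x (W^T *m w))) Iw.
  - exact: comp_lk (hprd x) homt.
  - by move=> a u v; rewrite /dual mulmxDr -scalemxAr !mxE; ring.
  - by move=> v [y [z ->]]; rewrite hpw hom gen (om_det tri alt).
have Kb : forall w, I2 Z w -> forall i, (W^T *m w) i i = 0.
  move=> w Iw i; apply: (span_eq (f := fun w => (W^T *m w) i i)
                     (g := fun _ => 0)) Iw.
  - exact: lin_entry.
  - by move=> a u v; rewrite mulr0 addr0.
  - by move=> v [y [z ->]]; rewrite gen !mxE !big_ord1 !mxE mulrC subrr.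
have Kc : forall w, I2 Z w -> forall i j, (W^T *m w) i j + (W^T *m w) j i = 0.
  move=> w Iw i j; apply: (span_eq (f := fun w => (W^T *m w) i j + (W^T *m w) j i)
                     (g := fun _ => 0)) Iw.
  - by move=> a u v; rewrite mulmxDr -scalemxAr !mxE; ring.
  - by move=> a u v; rewrite mulr0 addr0.
  - by move=> v [y [z ->]]; rewrite gen !mxE !big_ord1 !mxE; ring.
have dualE : forall A : T2 k, [/\ dual (e i0) A = A i1 i2, dual (e i1) A = - A i0 i2
                                & dual (e i2) A = A i0 i1].
  by move=> A; rewrite /dual !eE !eqs /=; split; ring.
have ClA : forall w, I2 Z w -> (forall l, omt (prd (e l) w) = 0) -> w = 0.
  move=> w Iw h.
  have d0 : forall l, dual (e l) (W^T *m w) = 0.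
    move=> l; have := h l; rewrite (Ka w Iw) => /eqP; rewrite mulf_eq0 (negbTE nc) /=.
    by move/eqP.
  have A0 : W^T *m w = 0.
    have [a b c'] := dualE (W^T *m w).
    have e12 := d0 i0; have e02 := d0 i1; have e01 := d0 i2.
    rewrite a in e12; rewrite b in e02; rewrite c' in e01.
    move/eqP: e02; rewrite oppr_eq0 => /eqP e02.
    have anti : forall i j, (W^T *m w) j i = - (W^T *m w) i j.
      move=> i j; apply/eqP; rewrite -addr_eq0 addrC; apply/eqP; exact: Kc.
    apply/matrixP => i j; rewrite [RHS]mxE.
    case: (ord3 i) => [->|[->|->]]; case: (ord3 j) => [->|[->|->]];
      rewrite ?Kb ?e12 ?e02 ?e01 // anti ?e12 ?e02 ?e01 oppr0 //.
  have -> : w = Z^T *m (W^T *m w).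
    by rewrite mulmxA -trmx_mul mulVmx // trmx1 mul1mx.
  by rewrite A0 mulmx0.
have ClB : forall a, (forall y z, omega a y z = 0) -> a = 0.
  move=> a h.
  have E : forall y z, c * dual a (tensor2 y z - tensor2 z y) = 0.
    by move=> y z; rewrite -(om_det tri alt) h.
  have E1 := E (e i1) (e i2); have E2 := E (e i0) (e i2); have E3 := E (e i0) (e i1).
  rewrite /dual !mxE !big_ord1 !mxE !eqs /= in E1 E2 E3.
  move: E1 E2 E3; rewrite !(mulr0, mulr1, mul0r, subr0, addr0, sub0r, add0r) => E1 E2 E3.
  move/eqP: E1; rewrite mulf_eq0 (negbTE nc) /= => /eqP E1.
  move/eqP: E2; rewrite mulf_eq0 (negbTE nc) oppr_eq0 /= => /eqP E2.
  move/eqP: E3; rewrite mulf_eq0 (negbTE nc) /= => /eqP E3.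
  apply/rowP => j; rewrite [RHS]mxE.
  by case: (ord3 j) => [->|[->|->]].
have ellz : forall x y, islin_k (fun z => ell Z R q omt prd x y z).
  move=> x y; rewrite /ell.
  exact: comp_lk (comp_ll (comp_ll (@tensor2_linr _ (zact Z y)) (@Ymap_lin _ R q hR)) (hprd x)) homt.
have ellsum : forall x y z, ell Z R q omt prd x y z = \sum_j z 0 j * ell Z R q omt prd x y (e j).
  move=> x y z; rewrite {1}(rowdecS z) (linkS (ellz x y)).
  by apply: eq_bigr => j _; rewrite (linkZ (ellz x y)).
have fa : forall a, (forall x z, ell Z R q omt prd a x z = 0) ->
    forall s, omt (prd a (Ymap R q s)) = 0.
  move=> a H s; set f := fun s => omt (prd a (Ymap R q s)).
  have hf : islin_k f := comp_lk (comp_ll (@Ymap_lin _ R q hR) (hprd a)) homt.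
  have ft : forall x z, f (tensor2 x z) = 0.
    by move=> x z; have := H (x *m W) z; rewrite /ell /zact mulmxKV.
  change (f s = 0).
  rewrite (matrix_sum_delta s) (linkS hf); apply: big1 => i _.
  rewrite (linkS hf); apply: big1 => j _.
  by rewrite (linkZ hf) delta_tensor ft mulr0.
have Yzero : forall x y, (forall l, ell Z R q omt prd (e l) x y = 0) ->
    Ymap R q (tensor2 (x *m Z) y) = 0.
  by move=> x y h; apply: ClA => //; apply: h.
have Yq : forall t, Ymap R q t = 0 -> R t = q *: t.
  by move=> t; rewrite /Ymap => /eqP; rewrite subr_eq0 => /eqP.
split.
  move=> f hf.
  pose xs := fun i : 'I_9 => (e (inord (i %/ 3) : 'I_3) : V k).
  pose ys := fun i : 'I_9 => (e (inord (i %% 3) : 'I_3) : V k).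
  pose M : 'M[k]_(3, 9) := \matrix_(j, i) ell Z R q omt prd (xs i) (ys i) (e j).
  have Mrow : forall (z : V k) i, (z *m M) 0 i = ell Z R q omt prd (xs i) (ys i) z.
    by move=> z i; rewrite ellsum mxE; apply: eq_bigr => j _; rewrite mxE.
  have inj : forall z : V k, z *m M = 0 -> z = 0.
    move=> z Hz.
    have h0 : forall a b : 'I_3, ell Z R q omt prd (e a) (e b) z = 0.
      move=> a b; move/matrixP: Hz => /(_ 0 (inord (3 * a + b)%N : 'I_9)).
      rewrite Mrow mxE /xs /ys inordK; last first.
        by have := ltn_ord a; have := ltn_ord b; lia.
      have -> : ((3 * a + b) %/ 3 = a)%N by rewrite mulnC divnMDl // divn_small // addn0.
      have -> : ((3 * a + b) %% 3 = b)%N by rewrite mulnC modnMDl modn_small.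
      by rewrite !inord_val.
    have Yb : forall b, Ymap R q (tensor2 (e b *m Z) z) = 0.
      by move=> b; apply: Yzero => l; exact: h0.
    apply/eqP/contraT => nz; exfalso.
    apply: S1; apply: (@braid_case1 _ R q hR hb z nz _ nq).
    move=> u; apply: Yq.
    pose g := fun u => Ymap R q (tensor2 u z).
    have hg : islin g := comp_ll (@tensor2_linl _ z) (@Ymap_lin _ R q hR).
    change (g u = 0).
    have -> : u = \sum_b (u *m W) 0 b *: (e b *m Z).
      rewrite -{1}(mulmxKV Zu u) {1}(rowdecS (u *m W)) mulmx_suml.
      by apply: eq_bigr => b _; rewrite scalemxAl.
    rewrite (linS hg); apply: big1 => b _; by rewrite (linZ hg) /g Yb scaler0.
  have rf : row_free M.
    rewrite -kermx_eq0; apply/eqP/row_matrixP => i; rewrite row0; apply: inj.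
    by rewrite -row_mul mulmx_ker row0.
  pose fc : 'cV[k]_3 := \col_j f (e j).
  exists 9%N, (fun i => (pinvmx M *m fc) i 0), xs, ys => z.
  have -> : f z = (z *m fc) 0 0.
    rewrite {1}(rowdecS z) (linkS hf) mxE; apply: eq_bigr => j _; by rewrite (linkZ hf) mxE.
  have -> : z *m fc = (z *m M) *m (pinvmx M *m fc).
    by rewrite (mulmxA (z *m M) (pinvmx M) fc) -(mulmxA z M (pinvmx M)) (mulmxVp rf) mulmx1.
  rewrite mxE.
  by apply: eq_bigr => i _; rewrite Mrow mulrC.
move=> a [H|H].
  apply: ClB => y z.
  have Iw : I2 Z (wedge2 Z y z).
    by exists 1%N, (fun _ => 1), (fun _ => wedge2 Z y z); split;
      [move=> _; exists y, z | rewrite big_ord1 scale1r].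
  have [v Ev] := (proj2 (hI _)) Iw.
  rewrite -hom -hpw Ev.
  have -> : R v - q *: v = - Ymap R q v by rewrite /Ymap opprB.
  by rewrite (linN (hprd a)) (linkN homt) (fa a H) oppr0.
apply/eqP/contraT => na; exfalso.
have nu : a *m Z != 0.
  by apply: contra na => /eqP h; rewrite -(mulmxK Zu a) h mul0mx.
apply: S1; apply: (@braid_case2 _ R q hR hb (a *m Z) nu _ nq).
by move=> v; apply: Yq; apply: Yzero => l; exact: H.
Qed.
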